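(* Let $C$ and $C'$ be filtered chain complexes with strictly filtration-decreasing differentials, and let $a\in\mathbb{R}$, $\delta>0$. Assume $C^{[a+\delta,a+3\delta)}=C^{[a,a+4\delta)}$ are both two-dimensional, while $C'^{[a,a+4\delta)}=0$. Assume there are chain maps $\phi\colon C\to C'$ and $\psi\colon C'\to C$, both of degree $\epsilon>0$, such that $\psi\phi$ and $\phi\psi$ are homotopic to automorphisms of filtered chain complexes via chain homotopies of degree $\epsilon$. If $\delta>\epsilon>0$, then $C^{[a+\delta,a+3\delta)}$ is a complex generated by two elements $x,y$ with $\partial x=ky$ for some unit $k$.
   Context: For a filtered complex $C$ with action filtration $\ell$, $C^{<a}=\ell^{-1}(-\infty,a)$ and $C^{[a,b)}=C^{<b}/C^{<a}$ is the quotient complex in the action window $[a,b)$. A map has degree $\epsilon$ if it raises action by at most $\epsilon$. An automorphism of filtered chain complexes is a degree-zero chain map with degree-zero inverse. *)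

(* Defs.v *)
From HB Require Import structures.
From mathcomp Require Import all_boot all_order all_algebra.
From mathcomp Require Import reals constructive_ereal.
Set Implicit Arguments. Unset Strict Implicit. Unset Printing Implicit Defensive.
Import Order.TTheory GRing.Theory Num.Theory.
Local Open Scope ring_scope.

Section FilteredComplexes.
Variables (R : realType) (K : fieldType) (V : lmodType K).

Definition filtered_complex (d : V -> V) (ell : V -> \bar R) : Prop :=
  [/\ forall x, d (d x) = 0,
      forall x, ell x = -oo%E <-> x = 0,
      forall x, ell x != +oo%E,
      forall x y, (ell (x + y)%R <= Order.max (ell x) (ell y))%E
    & forall (c : K) x, c != 0 -> ell (c *: x) = ell x].

Definition strictly_decreasing (d : V -> V) (ell : V -> \bar R) : Prop :=
  forall x, x != 0 -> (ell (d x) < ell x)%E.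

(* The family e : 'I_n -> V (of elements of C^{<b}) projects to a basis of
   the quotient C^{[a,b)} = C^{<b} / C^{<a}, where C^{<t} = ell^{-1}[-oo,t). *)
Definition window_basis (ell : V -> \bar R) (a b : R) (n : nat)
    (e : 'I_n -> V) : Prop :=
  [/\ forall i, (ell (e i) < b%:E)%E,
      forall c : 'I_n -> K,
        (ell (\sum_(i < n) c i *: e i)%R < a%:E)%E -> forall i, c i = 0
    & forall x, (ell x < b%:E)%E ->
        exists c : 'I_n -> K, (ell (x - \sum_(i < n) c i *: e i)%R < a%:E)%E].

Definition window_dim (ell : V -> \bar R) (a b : R) (n : nat) : Prop :=
  exists e : 'I_n -> V, window_basis ell a b e.

End FilteredComplexes.

Section Maps.
Variables (R : realType) (K : fieldType) (V W : lmodType K).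

Definition has_degree (ellV : V -> \bar R) (ellW : W -> \bar R)
    (eps : R) (f : V -> W) : Prop :=
  forall x, (ellW (f x) <= ellV x + eps%:E)%E.

Definition chain_map (dV : V -> V) (dW : W -> W) (f : V -> W) : Prop :=
  forall x, f (dV x) = dW (f x).

End Maps.

Definition filtered_automorphism (R : realType) (K : fieldType) (V : lmodType K)
    (d : V -> V) (ell : V -> \bar R) (A : {linear V -> V}) : Prop :=
  [/\ chain_map d d A, has_degree ell ell 0 A &
      exists B : {linear V -> V},
        [/\ has_degree ell ell 0 B, chain_map d d B,
            forall x, A (B x) = x & forall x, B (A x) = x]].

Definition homotopic_to_automorphism_deg (R : realType) (K : fieldType)
    (V : lmodType K) (d : V -> V) (ell : V -> \bar R) (eps : R) (g : V -> V) : Prop :=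
  exists (A H : {linear V -> V}),
    [/\ filtered_automorphism d ell A, has_degree ell ell eps H &
        forall x, g x - A x = d (H x) + H (d x)].

(* Main.v *)
Require Import Defs.
From HB Require Import structures.
From mathcomp Require Import all_boot all_order all_algebra.
From mathcomp Require Import reals constructive_ereal ring lra.
Import Order.TTheory GRing.Theory Num.Theory.
Set Implicit Arguments. Unset Strict Implicit. Unset Printing Implicit Defensive.
Local Open Scope ring_scope.

Definition lc3 (K : fieldType) (V : lmodType K) (t : V * V * V) (a b c : K) : V :=
  a *: t.1.1 + b *: t.1.2 + c *: t.2.

Lemma lc3D (K : fieldType) (V : lmodType K) (t : V * V * V) (a b c a' b' c' : K) :
  lc3 t a b c + lc3 t a' b' c' = lc3 t (a + a') (b + b') (c + c').
Proof.
rewrite /lc3 !scalerDl.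
set A := a *: _; set A' := a' *: _; set B := b *: _; set B' := b' *: _.
set C := c *: _; set C' := c' *: _.
by rewrite addrACA (addrACA A).
Qed.
Lemma lc3Z (K : fieldType) (V : lmodType K) (t : V * V * V) (k a b c : K) :
  k *: lc3 t a b c = lc3 t (k * a) (k * b) (k * c).
Proof. by rewrite /lc3 !scalerDr !scalerA. Qed.
Lemma lc3N (K : fieldType) (V : lmodType K) (t : V * V * V) (a b c : K) :
  - lc3 t a b c = lc3 t (- a) (- b) (- c).
Proof. by rewrite -scaleN1r lc3Z !mulN1r. Qed.
Lemma lc3_1 (K : fieldType) (V : lmodType K) (u w z : V) :
  u = lc3 (u, w, z) 1 0 0.
Proof. by rewrite /lc3 /= scale1r !scale0r !addr0. Qed.
Lemma lc3_2 (K : fieldType) (V : lmodType K) (u w z : V) :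
  w = lc3 (u, w, z) 0 1 0.
Proof. by rewrite /lc3 /= scale1r !scale0r addr0 add0r. Qed.
Lemma lc3_3 (K : fieldType) (V : lmodType K) (u w z : V) :
  z = lc3 (u, w, z) 0 0 1.
Proof. by rewrite /lc3 /= scale1r !scale0r !add0r. Qed.

Ltac lcsolve u w z :=
  let t := fresh "t" in
  let e1 := fresh "e" in let e2 := fresh "e" in let e3 := fresh "e" in
  have e1 := lc3_1 u w z; have e2 := lc3_2 u w z; have e3 := lc3_3 u w z;
  set t := (u, w, z) in e1 e2 e3;
  rewrite e3 e2 e1;
  clear e1 e2 e3;
  rewrite ?(lc3Z, lc3N, lc3D); congr lc3.


Section Gen.
Variables (K : fieldType) (V : lmodType K).
Variables (N P : V -> Prop).
Hypotheses (N0 : N 0) (ND : forall u v, N u -> N v -> N (u + v))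
  (NZ : forall (c : K) v, N v -> N (c *: v)).

Lemma NN v : N v -> N (- v).
Proof. by move=> h; rewrite -scaleN1r; apply: NZ. Qed.
Lemma NB u v : N u -> N v -> N (u - v).
Proof. by move=> hu hv; apply: ND => //; apply: NN. Qed.

Definition indep2 (u w : V) := forall c0 c1 : K, N (c0 *: u + c1 *: w) -> c0 = 0 /\ c1 = 0.
Definition span2 (u w : V) := forall v, P v -> exists c0 c1 : K, N (v - (c0 *: u + c1 *: w)).

Lemma span2_sym u w : span2 u w -> span2 w u.
Proof. rewrite /span2 => h v Pv. case: (h v Pv) => c0 [c1 H]. by exists c1, c0; rewrite (addrC (c1 *: w)). Qed.

Lemma indep2_sym u w : indep2 u w -> indep2 w u.
Proof. rewrite /indep2 => h c0 c1; rewrite addrC => /h [-> ->]; done. Qed.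

Lemma Ntrans x y z : N (x - y) -> N (y - z) -> N (x - z).
Proof. by move=> h1 h2; have := ND h1 h2; rewrite addrA subrK. Qed.

Lemma exch u w z al be : span2 u w -> N (z - (al *: u + be *: w)) -> be != 0 -> span2 u z.
Proof.
rewrite /span2 => hs hz hbe v Pv; have [c0 [c1 hv]] := hs v Pv.
exists (c0 - c1 / be * al), (c1 / be).
apply: (Ntrans hv).
have -> : c0 *: u + c1 *: w - ((c0 - c1 / be * al) *: u + c1 / be *: z)
   = - (c1 / be) *: (z - (al *: u + be *: w)).
  lcsolve u w z.
  - by ring.
  - by field.
  - by ring.
by apply: NZ.
Qed.

Variable d : {linear V -> V}.
Hypotheses (dd : forall x, d (d x) = 0) (Nd : forall v, N v -> N (d v)).

Lemma key u w : indep2 u w -> span2 u w -> ~ N (d u) -> P (d u) ->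
  indep2 u (d u) /\ span2 u (d u).
Proof.
move=> hi hs nNd Pd.
have [al [be hr]] := hs _ Pd.
have [be0|bne0] := eqVneq be 0.
  exfalso; move: hr; rewrite be0 scale0r addr0 => hr.
  have [al0|alne0] := eqVneq al 0.
    by apply: nNd; move: hr; rewrite al0 scale0r subr0.
  have := Nd hr; rewrite linearB linearZ /= dd sub0r => h.
  apply: nNd; have := NZ (- al^-1) h.
  by rewrite scalerN scaleNr opprK scalerA mulVf // scale1r.
split; last exact: exch hs hr bne0.
move=> c0 c1 h.
have h2 : N ((c0 + c1 * al) *: u + (c1 * be) *: w).
  have -> : (c0 + c1 * al) *: u + (c1 * be) *: w
      = (c0 *: u + c1 *: d u) - c1 *: (d u - (al *: u + be *: w)).
    lcsolve u w (d u).
    - by ring.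
    - by ring.
    - by ring.
  by apply: NB => //; apply: NZ.
have [h3 h4] := hi _ _ h2.
have c10 : c1 = 0 by move/eqP: h4; rewrite mulf_eq0 (negbTE bne0) orbF => /eqP.
by move: h3; rewrite c10 mul0r addr0.
Qed.
End Gen.

Lemma sum2 (K : fieldType) (V : lmodType K) (F : 'I_2 -> V) :
  \sum_(i < 2) F i = F ord0 + F ord_max.
Proof.
rewrite big_ord_recr big_ord1 /=; congr (F _ + F _); exact: val_inj.
Qed.

Lemma ord2 (i : 'I_2) : i = ord0 \/ i = ord_max.
Proof. case: i => [[|[|//]]] p; [left|right]; exact: val_inj. Qed.

Lemma deg_lt (R : realType) (x y : \bar R) (eps t s : R) :
  (y <= x + eps%:E)%E -> (x < t%:E)%E -> t + eps <= s -> (y < s%:E)%E.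
Proof.
case: x => [r| |] //= hy hx hs.
- apply: (le_lt_trans hy); rewrite -EFinD lte_fin.
  by apply: (lt_le_trans _ hs); rewrite ltrD2r -lte_fin.
- by move: hy; rewrite leeNy_eq => /eqP ->; apply: ltNyr.
Qed.

Section Ell.
Variables (R : realType) (K : fieldType) (V : lmodType K).
Variables (d : {linear V -> V}) (ell : V -> \bar R).
Hypothesis fc : filtered_complex d ell.

Definition ltN (t : R) (v : V) : Prop := (ell v < t%:E)%E.

Lemma ell0 : ell 0 = -oo%E.
Proof. by case: fc => _ h _ _ _; apply/h. Qed.

Lemma lt0 t : ltN t 0.
Proof. by rewrite /ltN ell0 ltNyr. Qed.

Lemma ltD t u v : ltN t u -> ltN t v -> ltN t (u + v).
Proof.
case: fc => _ _ _ hD _ hu hv; rewrite /ltN.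
by apply: (le_lt_trans (hD u v)); rewrite gt_max hu hv.
Qed.

Lemma ltZ t (c : K) v : ltN t v -> ltN t (c *: v).
Proof.
case: fc => _ _ _ _ hZ hv; have [->|cn0] := eqVneq c 0.
  by rewrite scale0r; apply: lt0.
by rewrite /ltN hZ.
Qed.

Lemma lt_mono t s v : t <= s -> ltN t v -> ltN s v.
Proof. by move=> hts hv; apply: (lt_le_trans hv); rewrite lee_fin. Qed.

Lemma ltd t v : strictly_decreasing d ell -> ltN t v -> ltN t (d v).
Proof.
move=> sd hv; have [->|vn0] := eqVneq v 0.
  by rewrite linear0; apply: lt0.
exact: lt_trans (sd _ vn0) hv.
Qed.

Lemma wb_to lo hi (e : 'I_2 -> V) : window_basis ell lo hi e ->
  [/\ ltN hi (e ord0), ltN hi (e ord_max), indep2 (ltN lo) (e ord0) (e ord_max)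
    & span2 (ltN lo) (ltN hi) (e ord0) (e ord_max)].
Proof.
case=> h1 h2 h3; split; [exact: h1|exact: h1| |].
- move=> c0 c1 h.
  pose c := fun i : 'I_2 => if i == ord0 then c0 else c1.
  have := h2 c; rewrite sum2 /c /= => /(_ h) hc.
  by split; [exact: (hc ord0)|exact: (hc ord_max)].
- move=> v hv; have [c hc] := h3 v hv.
  by exists (c ord0), (c ord_max); move: hc; rewrite sum2.
Qed.

Lemma wb_of lo hi (x y : V) : ltN hi x -> ltN hi y ->
  indep2 (ltN lo) x y -> span2 (ltN lo) (ltN hi) x y ->
  window_basis ell lo hi (fun i : 'I_2 => if i == ord0 then x else y).
Proof.
move=> hx hy hid hs; split.
- by move=> i; case: (ord2 i) => ->.
- move=> c; rewrite sum2 /= => /hid [h0 h1] i.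
  by case: (ord2 i) => ->.
- move=> v /hs [c0 [c1 h]].
  exists (fun i : 'I_2 => if i == ord0 then c0 else c1).
  by rewrite sum2.
Qed.

Lemma ltB t u v : ltN t u -> ltN t v -> ltN t (u - v).
Proof. by move=> hu hv; apply: ltD => //; rewrite -scaleN1r; apply: ltZ. Qed.

Lemma exchL lo hi u w z al be : span2 (ltN lo) (ltN hi) u w ->
  ltN lo (z - (al *: u + be *: w)) -> be != 0 -> span2 (ltN lo) (ltN hi) u z.
Proof.
move=> h1 h2 h3; apply: exch h1 h2 h3;
  by [move=> *; apply: ltD | move=> *; apply: ltZ | apply: lt0].
Qed.

Lemma keyL lo hi u w : strictly_decreasing d ell ->
  indep2 (ltN lo) u w -> span2 (ltN lo) (ltN hi) u w ->
  ~ ltN lo (d u) -> ltN hi (d u) ->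
  indep2 (ltN lo) u (d u) /\ span2 (ltN lo) (ltN hi) u (d u).
Proof.
move=> sd h1 h2 h3 h4; case: fc => dd _ _ _ _.
apply: key h1 h2 h3 h4.
all: by [done | move=> *; apply: ltD | move=> *; apply: ltZ | apply: lt0 | move=> *; apply: ltd].
Qed.

End Ell.

Theorem lemma2p3 (R : realType) (K : fieldType) (V W : lmodType K)
    (dV : {linear V -> V}) (ellV : V -> \bar R)
    (dW : {linear W -> W}) (ellW : W -> \bar R)
    (a delta eps : R)
    (phi : {linear V -> W}) (psi : {linear W -> V}) :
  filtered_complex dV ellV -> strictly_decreasing dV ellV ->
  filtered_complex dW ellW -> strictly_decreasing dW ellW ->
  0 < delta ->
  window_dim ellV (a + delta) (a + 3%:R * delta) 2 ->
  window_dim ellV a (a + 4%:R * delta) 2 ->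
  window_dim ellW a (a + 4%:R * delta) 0 ->
  0 < eps -> eps < delta ->
  chain_map dV dW phi -> has_degree ellV ellW eps phi ->
  chain_map dW dV psi -> has_degree ellW ellV eps psi ->
  homotopic_to_automorphism_deg dV ellV eps (psi \o phi) ->
  homotopic_to_automorphism_deg dW ellW eps (phi \o psi) ->
  exists (e : 'I_2 -> V) (k : K),
    [/\ k \is a GRing.unit,
        window_basis ellV (a + delta) (a + 3%:R * delta) e &
        (ellV (dV (e ord0) - k *: e ord_max)%R < (a + delta)%:E)%E].
Proof.
move=> fcV sdV fcW sdW dpos [e he] [f hf] [g hg] epos epsd chphi dphi chpsi dpsi
  [A [H [[chA degA [B [degB chB AB BA]]] degH hom]]] _.
set t1 := a + delta; set t3 := a + 3%:R * delta; set t4 := a + 4%:R * delta.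
have ha1 : a <= t1 by rewrite /t1; lra.
have h13 : t1 <= t3 by rewrite /t1 /t3; lra.
have h34 : t3 <= t4 by rewrite /t3 /t4; lra.
have hae : a + eps <= t1 by rewrite /t1; lra.
have h3e : t3 + eps <= t4 by rewrite /t3 /t4; lra.
have h10 : t1 + 0 <= t1 by rewrite addr0.
have [Pe0 Pe1 ie se] := wb_to he.
have [_ _ _ sf] := wb_to hf.
have nN1e0 : ~ ltN ellV t1 (e ord0).
  move=> h; have := ie 1 0; rewrite scale1r scale0r addr0 => /(_ h) [/eqP].
  by rewrite oner_eq0.
have [g0 sg] : exists g0, span2 (ltN ellV a) (ltN ellV t4) (e ord0) g0.
  have [al [be h]] := sf (e ord0) (lt_mono h34 Pe0).
  have [be0|bn0] := eqVneq be 0.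
    have [al0|an0] := eqVneq al 0.
      exfalso; apply: nN1e0; apply: (lt_mono ha1).
      by move: h; rewrite be0 al0 !scale0r addr0 subr0.
    exists (f ord_max); apply: span2_sym.
    apply: (exchL fcV (span2_sym sf) (al := 0) _ an0).
    by move: h; rewrite be0 !scale0r addr0 add0r.
  exists (f ord0); apply: span2_sym; exact: (exchL fcV sf h bn0).
have sae : span2 (ltN ellV a) (ltN ellV t4) (e ord0) (e ord_max).
  have [ga [gb h]] := sg (e ord_max) (lt_mono h34 Pe1).
  have [gb0|gbn0] := eqVneq gb 0.
    exfalso; move: h; rewrite gb0 scale0r addr0 => h.
    have X : ltN ellV (a + delta) ((- ga) *: e ord0 + 1 *: e ord_max).
      by rewrite scale1r scaleNr (addrC (- (ga *: e ord0))); apply: (lt_mono ha1).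
    by have [_ /eqP] := ie _ _ X; rewrite oner_eq0.
  exact: (exchL fcV sg h gbn0).
have gapP v : ltN ellV t4 v -> ltN ellV t3 v.
  move=> hv; have [c0 [c1 h]] := sae v hv.
  rewrite -(subrK (c0 *: e ord0 + c1 *: e ord_max) v).
  apply: (ltD fcV); first exact: (lt_mono (le_trans ha1 h13)).
  by apply: (ltD fcV); apply: (ltZ fcV).
have gapN v : ltN ellV t1 v -> ltN ellV a v.
  move=> hv; have [c0 [c1 h]] := sae v (lt_mono h34 (lt_mono h13 hv)).
  have hs : ltN ellV t1 (c0 *: e ord0 + c1 *: e ord_max).
    have -> : c0 *: e ord0 + c1 *: e ord_max = v - (v - (c0 *: e ord0 + c1 *: e ord_max)).
      by rewrite opprB addrCA subrr addr0.
    by apply: (ltB fcV) => //; apply: (lt_mono ha1).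
  have [c00 c10] := ie _ _ hs.
  by move: h; rewrite c00 c10 !scale0r addr0 subr0.
have [u [w [hPu [hi [hs hnd]]]]] : exists u w, ltN ellV t3 u /\
    indep2 (ltN ellV t1) u w /\ span2 (ltN ellV t1) (ltN ellV t3) u w /\
    ~ ltN ellV t1 (dV u).
  have [h0|h0] := boolP (ellV (dV (e ord0)) < t1%:E)%E; last first.
    exists (e ord0), (e ord_max); split; [exact: Pe0 | split; [exact: ie | split; [exact: se |]]].
    by rewrite /ltN; apply/negP.
  have [h1|h1] := boolP (ellV (dV (e ord_max)) < t1%:E)%E; last first.
    exists (e ord_max), (e ord0); split; [exact: Pe1 | split; [exact: indep2_sym | split; [exact: span2_sym |]]].
    by rewrite /ltN; apply/negP.
  exfalso.
  have dz z : ltN ellV t3 z -> ltN ellV t1 (dV z).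
    move=> hz; have [c0 [c1 h]] := se z hz.
    rewrite -(subrK (c0 *: e ord0 + c1 *: e ord_max) z) linearD.
    apply: (ltD fcV); first exact: (ltd fcV sdV h).
    by rewrite linearD !linearZ; apply: (ltD fcV); apply: (ltZ fcV).
  set x := e ord0.
  have hphi4 : ltN ellW t4 (phi x) := deg_lt (dphi x) Pe0 h3e.
  have hphi : ltN ellW a (phi x).
    case: hg => _ _ /(_ _ hphi4) [c]; by rewrite big_ord0 subr0.
  have hpp : ltN ellV t1 (psi (phi x)) := deg_lt (dpsi (phi x)) hphi hae.
  have hH : ltN ellV t1 (dV (H x)).
    by apply: dz; apply: gapP; exact: (deg_lt (degH x) Pe0 h3e).
  have hHd : ltN ellV t1 (H (dV x)).
    exact: (deg_lt (degH (dV x)) (gapN _ h0) hae).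
  have hA : ltN ellV t1 (A x).
    have -> : A x = (psi \o phi) x - (dV (H x) + H (dV x)).
      by rewrite -hom opprB addrC subrK.
    by apply: (ltB fcV) => //; apply: (ltD fcV).
  apply: nN1e0; rewrite -/x -(BA x).
  exact: (deg_lt (degB (A x)) hA h10).
have Pdu : ltN ellV t3 (dV u) := ltd fcV sdV hPu.
have [ki ks] := keyL fcV sdV hi hs hnd Pdu.
exists (fun i : 'I_2 => if i == ord0 then u else dV u), 1; split.
- exact: unitr1.
- exact: wb_of.
- by rewrite /= scale1r subrr (ell0 fcV) ltNyr.
Qed.
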